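(* Let $l$ and $m$ be positive integers and let $q(x)=x^6-(l+m+3)x^4+(lm+l+m+3)x^2-1$. Suppose $\pm\theta_1,\pm\theta_2,\pm\theta_3$ are the six roots of $q(x)$ in its splitting field over $\mathbb{Q}$. If $q(x)$ is irreducible over $\mathbb{Q}$, then $1,\theta_1,\theta_2,\theta_3$ are linearly independent over $\mathbb{Q}$.
   Context: The roots of $q$ are simple, nonzero and real, and come in pairs $\pm\theta_j$; the labeling means the six roots are $\theta_1,-\theta_1,\theta_2,-\theta_2,\theta_3,-\theta_3$. *)

(* Defs.v *)
From HB Require Import structures.
From mathcomp Require Import all_boot all_order all_algebra all_field.
Set Implicit Arguments. Unset Strict Implicit. Unset Printing Implicit Defensive.
Import GRing.Theory Num.Theory.
Local Open Scope ring_scope.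

Definition q_lm (l m : nat) : {poly rat} :=
  'X^6 - (l + m + 3)%:R *: 'X^4 + (l * m + l + m + 3)%:R *: 'X^2 - 1.

(* Main.v *)
Require Import Defs.
From HB Require Import structures.
From mathcomp Require Import all_boot all_order all_algebra all_field.
From mathcomp Require Import ring lra.
Import GRing.Theory Num.Theory.
Local Open Scope ring_scope.

Lemma size_small4 (u4 u2 u1 u0 : rat) :
 (size (u4 *: 'X^4 + u2 *: 'X^2 + u1 *: 'X + u0%:P : {poly rat})%R <= 6)%N.
Proof.
apply: (leq_trans (size_polyD _ _)); rewrite geq_max; apply/andP; split;
  last by apply: (leq_trans (size_polyC_leq1 _)).
apply: (leq_trans (size_polyD _ _)); rewrite geq_max; apply/andP; split;
  last by apply: (leq_trans (size_scale_leq _ _)); rewrite size_polyX.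
apply: (leq_trans (size_polyD _ _)); rewrite geq_max; apply/andP; split.
- by apply: (leq_trans (size_scale_leq _ _)); rewrite size_polyXn.
- by apply: (leq_trans (size_scale_leq _ _)); rewrite size_polyXn.
Qed.

Lemma coef_small4 (u4 u2 u1 u0 : rat) :
 (u4 *: 'X^4 + u2 *: 'X^2 + u1 *: 'X + u0%:P : {poly rat}) = 0 -> u4 = 0 /\ u1 = 0.
Proof.
move=> P0.
have c4 := congr1 (fun p : {poly rat} => p`_4) P0.
have c1 := congr1 (fun p : {poly rat} => p`_1) P0.
move: c4 c1. rewrite !coefD !coefZ !coefXn !coefX !coefC.
rewrite !eqxx /= !mulr1 !mulr0 !addr0 !add0r.
by move=> -> ->.
Qed.

Lemma root_small4 (L : fieldExtType rat) (r : L) (u4 u2 u1 u0 : rat) :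
 in_alg L u4 * r^+4 + in_alg L u2 * r^+2 + in_alg L u1 * r + in_alg L u0 = 0 ->
 root (map_poly (in_alg L) (u4 *: 'X^4 + u2 *: 'X^2 + u1 *: 'X + u0%:P)) r.
Proof.
move=> h.
rewrite /root !raddfD /= !map_polyZ !map_polyXn map_polyX map_polyC.
rewrite !hornerD !hornerZ !hornerXn hornerX hornerC.
by rewrite h.
Qed.
Section Proof25.
Variables (l m : nat) (L : fieldExtType rat) (t1 t2 t3 : L).
Hypotheses (hl : (0<l)%N) (hm : (0<m)%N).
Let rs := [:: t1; - t1; t2; - t2; t3; - t3].
Let qL := map_poly (in_alg L) (q_lm l m).
Hypothesis hq : qL = \prod_(r <- rs) ('X - r%:P).
Hypothesis hirr : irreducible_poly (q_lm l m).

Lemma root_qL r : root qL r = (r \in rs).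
Proof. by rewrite hq root_prod_XsubC. Qed.

Lemma size_qL : size qL = 7%N.
Proof. by rewrite hq size_prod_XsubC. Qed.

Lemma qL_over : qL \is a polyOver 1%VS.
Proof. by apply/polyOver1P; exists (q_lm l m). Qed.

Lemma minPoly_q r : r \in rs -> minPoly 1 r %= qL.
Proof.
move=> hr; have /polyOver1P[p Dp] := minPolyOver 1 r.
have hd : minPoly 1 r %| qL by apply: minPoly_dvdp; rewrite ?qL_over ?root_qL.
rewrite Dp /qL eqp_map.
have hpq : p %| q_lm l m by rewrite -(dvdp_map (in_alg L)) -Dp.
case: hirr => _ /(_ p) H; apply: H hpq.
apply/negP => /size_poly1P [c c0 Dc].
have := root_minPoly 1 r; rewrite Dp Dc map_polyC /= rootC.
by rewrite scaler_eq0 oner_eq0 orbF (negPf c0).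
Qed.

Lemma uniq_rs : uniq rs.
Proof.
have hs : separable_element 1 t1.
  apply: pcharf0_separable => p; rewrite pchar_lalg pchar_num //.
move: hs; rewrite /separable_element (eqp_separable (@minPoly_q t1 (mem_head _ _))).
by rewrite hq separable_prod_XsubC.
Qed.
Lemma small_poly r (P : {poly rat}) : r \in rs -> (size P <= 6)%N ->
  root (map_poly (in_alg L) P) r -> P = 0.
Proof.
move=> hr sP hP.
apply/eqP; rewrite -(map_poly_eq0 (in_alg L)); apply: contraT => nz.
have /polyOver1P hO : exists q, map_poly (in_alg L) P = map_poly (in_alg L) q by exists P.
have := dvdp_leq nz (minPoly_dvdp hO hP).
by rewrite (eqp_size (@minPoly_q r hr)) size_qL size_map_poly => /leq_trans /(_ sP).
Qed.

Notation iA := (in_alg L).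

Lemma small_deg r : r \in rs -> forall u4 u2 u1 u0 : rat,
  iA u4 * r^+4 + iA u2 * r^+2 + iA u1 * r + iA u0 = 0 -> u4 = 0 /\ u1 = 0.
Proof.
move=> hr u4 u2 u1 u0 h; apply: coef_small4.
exact: (@small_poly r _ hr (size_small4 _ _ _ _) (@root_small4 L r _ _ _ _ h)).
Qed.

Let A : rat := (l + m + 3)%:R.
Let B : rat := (l * m + l + m + 3)%:R.

Lemma q_eval r : r \in rs -> r^+6 - iA A * r^+4 + iA B * r^+2 - 1 = 0.
Proof.
rewrite -root_qL /root /qL /q_lm !(raddfB, raddfD) /= !map_polyZ !map_polyXn rmorph1.
rewrite !hornerD !hornerN !hornerZ !hornerXn hornerC.
by rewrite /A /B !natrD natrM => /eqP.
Qed.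

Lemma rs_nz r : r \in rs -> r != 0.
Proof.
move=> hr; apply/negP => /eqP r0.
have := @small_deg r hr 0 0 1 0.
rewrite r0 rmorph0 rmorph1 !mul0r !add0r mulr0 => /(_ (addr0 _)) [_].
by apply/eqP; rewrite oner_eq0.
Qed.

Lemma iA_eq0 (a : rat) : iA a = 0 -> a = 0.
Proof. by move/eqP; rewrite fmorph_eq0 => /eqP. Qed.

Lemma irr1 r (a b : rat) : r \in rs -> iA a + iA b * r = 0 -> a = 0 /\ b = 0.
Proof.
move=> hr h.
have [_ b0] : (0:rat) = 0 /\ b = 0.
  by apply: (@small_deg r hr 0 0 b a); rewrite rmorph0 !mul0r !add0r addrC.
split=> //; move: h; rewrite b0 rmorph0 mul0r addr0; exact: iA_eq0.
Qed.

Lemma ratio r s (c : rat) : r \in rs -> s \in rs -> s = iA c * r -> c ^+ 2 = 1.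
Proof.
move=> hr hs Ds.
have Qr := @q_eval r hr; have Qs := @q_eval s hs; rewrite Ds in Qs.
have [h4 _] : A * (c^+4 - c^+6) = 0 /\ (0:rat) = 0.
  apply: (@small_deg r hr (A * (c^+4 - c^+6)) (B * (c^+6 - c^+2)) 0 (1 - c^+6)).
  have E : iA (A * (c ^+ 4 - c ^+ 6)) * r ^+ 4 + iA (B * (c ^+ 6 - c ^+ 2)) * r ^+ 2 +
      iA 0 * r + iA (1 - c ^+ 6) =
    iA (c^+6) * (r ^+ 6 - iA A * r ^+ 4 + iA B * r ^+ 2 - 1) -
    ((iA c * r) ^+ 6 - iA A * (iA c * r) ^+ 4 + iA B * (iA c * r) ^+ 2 - 1).
    ring.
  by rewrite E Qr Qs mulr0 subr0.
have A0 : A != 0 by rewrite /A pnatr_eq0 addn_eq0 andbF.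
move/eqP: h4; rewrite mulf_eq0 (negPf A0) /=.
have -> : c ^+ 4 - c ^+ 6 = c ^+ 4 * (1 - c ^+ 2) by ring.
rewrite mulf_eq0 expf_eq0 /= subr_eq0 => /orP [c0 | /eqP <-] //.
have := @rs_nz s hs; by rewrite Ds (eqP c0) rmorph0 mul0r eqxx.
Qed.

Lemma two_term r s (b d : rat) : r \in rs -> s \in rs -> s != r -> s != - r ->
  iA b * r + iA d * s = 0 -> b = 0 /\ d = 0.
Proof.
move=> hr hs sr snr h.
have d0 : d = 0.
  have [//|dn0] := eqVneq d 0; exfalso.
  have Ds : s = iA (- b / d) * r.
    apply: (mulfI (_ : iA d != 0)); first by rewrite fmorph_eq0.
    rewrite mulrA -rmorphM [d * _]mulrC divfK // rmorphN mulNr.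
    by apply/eqP; rewrite -addr_eq0 addrC h.
  have := @ratio r s _ hr hs Ds; move/eqP; rewrite sqrf_eq1 => /orP [] /eqP c1.
    by move: sr; rewrite Ds c1 rmorph1 mul1r eqxx.
  by move: snr; rewrite Ds c1 rmorphN rmorph1 mulN1r eqxx.
split=> //; move: h; rewrite d0 rmorph0 mul0r addr0 => /eqP.
by rewrite mulf_eq0 (negPf (@rs_nz r hr)) orbF fmorph_eq0 => /eqP.
Qed.

Lemma hom_exists : exists2 g : 'End(L), kHom 1 <<1 & rs>>%AS g & g t1 = - t1.
Proof.
have hM : (<<1; t1>>%AS <= <<1 & rs>>%AS)%VS.
  apply/FadjoinP; split; first exact: sub1v.
  by apply: seqv_sub_adjoin; rewrite mem_head.
have hroot : root (map_poly \1%VF (minPoly 1 t1)) (- t1).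
  rewrite (eq_map_poly (fun x => id_lfunE x)) map_poly_id //.
  by rewrite (eqp_root (@minPoly_q t1 (mem_head _ _))) root_qL !inE eqxx orbT.
have hf : kHom 1 <<1; t1>>%AS (kHomExtend 1 \1 t1 (- t1)).
  by apply: kHomExtendP; [exact: subvv | exact: kHom1 |].
have hs : splittingFieldFor <<1; t1>>%AS qL <<1 & rs>>%AS.
  apply: (@splittingFieldForS _ _ 1%AS); [exact: sub1v | exact: hM |].
  by exists rs; rewrite ?hq ?eqpxx.
have [g hg gf] := kHom_extends (sub1v _) hf qL_over hs.
exists g => //; rewrite -gf ?memv_adjoin //.
by rewrite (@kHomExtend_val _ _ 1%AS) ?kHom1.
Qed.

Lemma eps_sq : (t1 * t2 * t3) ^+ 2 = 1.
Proof.
have h0 := congr1 (fun p => p.[0]) hq; move: h0 => /=.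
rewrite horner_prod !big_cons big_nil !hornerXsubC.
rewrite /qL -[0 in LHS](rmorph0 (in_alg L)) horner_map /q_lm.
rewrite !hornerD !hornerN !hornerZ !hornerXn hornerC !expr0n /= !mulr0 !subrr.
rewrite sub0r scaleN1r => h0.
have -> : (t1 * t2 * t3) ^+ 2 = - ((0 - t1) * ((0 - - t1) * ((0 - t2) * ((0 - - t2) *
   ((0 - t3) * ((0 - - t3) * 1)))))) by ring.
by rewrite -h0 opprK.
Qed.

Lemma indep (a b1 b2 b3 : rat) :
  iA a + iA b1 * t1 + iA b2 * t2 + iA b3 * t3 = 0 ->
  [/\ a = 0, b1 = 0, b2 = 0 & b3 = 0].
Proof.
move=> R.
have [g hg g1] := hom_exists.
have [gid gM] := kHomP_tmp hg.
have mE x : x \in rs -> x \in <<1 & rs>>%AS by move=> hx; apply: seqv_sub_adjoin.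
have E1 : t1 \in <<1 & rs>>%AS by apply: mE; rewrite !inE eqxx.
have E2 : t2 \in <<1 & rs>>%AS by apply: mE; rewrite !inE eqxx !orbT.
have E3 : t3 \in <<1 & rs>>%AS by apply: mE; rewrite !inE eqxx !orbT.
have iA1 (c : rat) : iA c \in 1%VS by apply: memvZ; apply: mem1v.
have gA x (c : rat) : x \in <<1 & rs>>%AS -> g (iA c * x) = iA c * g x.
  move=> hx; have hc : iA c \in <<1 & rs>>%AS by move: (iA1 c); apply/subvP; exact: sub1v.
  by rewrite gM // gid.
have Gapp x1 x2 x3 : x1 \in <<1 & rs>>%AS -> x2 \in <<1 & rs>>%AS -> x3 \in <<1 & rs>>%AS ->
    iA a + iA b1 * x1 + iA b2 * x2 + iA b3 * x3 = 0 ->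
    iA a + iA b1 * g x1 + iA b2 * g x2 + iA b3 * g x3 = 0.
  move=> h1 h2 h3 h; have := congr1 g h; rewrite !raddfD /= !gA // gid ?iA1 //.
  by rewrite raddf0.
have gR := Gapp _ _ _ E1 E2 E3 R.
have EN x : x \in <<1 & rs>>%AS -> - x \in <<1 & rs>>%AS by move=> h; rewrite rpredN.
have root_g x : x \in rs -> g x \in rs.
  move=> hx; rewrite -root_qL; apply: (kHom_root_id (sub1v _) hg qL_over (mE _ hx)).
  by rewrite root_qL.
have ginj x : x \in <<1 & rs>>%AS -> x != 0 -> g x != 0.
  move=> hx nx; apply/eqP => gx0.
  have : g (x * x^-1) = 1 by rewrite mulfV // gid ?mem1v.
  by rewrite gM ?memvV // gx0 mul0r => /eqP; rewrite eq_sym oner_eq0.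
have gE : g (t1 * t2 * t3) = t1 * t2 * t3.
  have := eps_sq; move/eqP; rewrite sqrf_eq1 => /orP [] /eqP ->.
    by rewrite gid ?mem1v.
  by rewrite gid // rpredN mem1v.
have gP : g t1 * g t2 * g t3 = t1 * t2 * t3 by rewrite -gE gM ?rpredM // gM.
have U := uniq_rs.
have n21 : t2 != t1 by apply: contraTneq U => e; rewrite /rs e /= !inE !eqxx /= ?orbT /= ?andbF.
have n2m1 : t2 != - t1 by apply: contraTneq U => e; rewrite /rs e /= !inE !eqxx /= ?orbT /= ?andbF.
have n31 : t3 != t1 by apply: contraTneq U => e; rewrite /rs e /= !inE !eqxx /= ?orbT /= ?andbF.
have n3m1 : t3 != - t1 by apply: contraTneq U => e; rewrite /rs e /= !inE !eqxx /= ?orbT /= ?andbF.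
have n32 : t3 != t2 by apply: contraTneq U => e; rewrite /rs e /= !inE !eqxx /= ?orbT /= ?andbF.
have n3m2 : t3 != - t2 by apply: contraTneq U => e; rewrite /rs e /= !inE !eqxx /= ?orbT /= ?andbF.
have nz1 : t1 != 0 by apply: rs_nz; rewrite !inE eqxx.
have nz2 : t2 != 0 by apply: rs_nz; rewrite !inE eqxx !orbT.
have nz3 : t3 != 0 by apply: rs_nz; rewrite !inE eqxx !orbT.
have r1 : t1 \in rs by rewrite !inE eqxx.
have r2 : t2 \in rs by rewrite !inE eqxx !orbT.
have r3 : t3 \in rs by rewrite !inE eqxx !orbT.
have twoz (c : rat) : c + c = 0 -> c = 0 by move=> h; lra.
move: (root_g _ r2); rewrite !inE => /orP [/eqP g2 | /orP [/eqP g2 | /orP [/eqP g2 |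
   /orP [/eqP g2 | /orP [/eqP g2 | /eqP g2]]]]].
- exfalso; have := ginj (t2 + t1) (rpredD E2 E1).
  by rewrite addr_eq0 n2m1 raddfD /= g1 g2 subrr eqxx => /(_ isT).
- exfalso; have := ginj (t2 - t1) (rpredB E2 E1).
  by rewrite subr_eq0 n21 raddfB /= g1 g2 subrr eqxx => /(_ isT).
- have g3 : g t3 = - t3.
    apply: (mulfI (_ : - t1 * t2 != 0)); first by rewrite mulf_eq0 oppr_eq0 negb_or nz1 nz2.
    transitivity (g t1 * g t2 * g t3); first by rewrite g1 g2.
    rewrite gP; ring.
  rewrite g1 g2 g3 in gR.
  have S : iA (a + a) + iA (b2 + b2) * t2 =
    (iA a + iA b1 * t1 + iA b2 * t2 + iA b3 * t3) + (iA a + iA b1 * - t1 + iA b2 * t2 + iA b3 * - t3) by ring.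
  rewrite R gR addr0 in S; have [/twoz a0 /twoz b20] := @irr1 t2 _ _ r2 S.
  rewrite a0 b20 !rmorph0 mul0r add0r addr0 in R.
  by have [] := @two_term t1 t3 _ _ r1 r3 n31 n3m1 R.
- have g3 : g t3 = t3.
    apply: (mulfI (_ : - t1 * - t2 != 0)); first by rewrite mulf_eq0 !oppr_eq0 negb_or nz1 nz2.
    transitivity (g t1 * g t2 * g t3); first by rewrite g1 g2.
    rewrite gP; ring.
  rewrite g1 g2 g3 in gR.
  have S : iA (a + a) + iA (b3 + b3) * t3 =
    (iA a + iA b1 * t1 + iA b2 * t2 + iA b3 * t3) + (iA a + iA b1 * - t1 + iA b2 * - t2 + iA b3 * t3) by ring.
  rewrite R gR addr0 in S; have [/twoz a0 /twoz b30] := @irr1 t3 _ _ r3 S.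
  rewrite a0 b30 !rmorph0 mul0r add0r addr0 in R.
  by have [] := @two_term t1 t2 _ _ r1 r2 n21 n2m1 R.
- have g3 : g t3 = - t2.
    apply: (mulfI (_ : - t1 * t3 != 0)); first by rewrite mulf_eq0 oppr_eq0 negb_or nz1 nz3.
    transitivity (g t1 * g t2 * g t3); first by rewrite g1 g2.
    rewrite gP; ring.
  rewrite g1 g2 g3 in gR.
  have ggR := Gapp _ _ _ (EN _ E1) E3 (EN _ E2) gR.
  rewrite !raddfN /= g1 g3 g2 opprK in ggR.
  have S : iA (a + a) + iA (b1 + b1) * t1 =
    (iA a + iA b1 * t1 + iA b2 * t2 + iA b3 * t3) + (iA a + iA b1 * t1 + iA b2 * - t2 + iA b3 * - t3) by ring.
  rewrite R ggR addr0 in S; have [/twoz a0 /twoz b10] := @irr1 t1 _ _ r1 S.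
  rewrite a0 b10 !rmorph0 mul0r !add0r in R.
  by have [] := @two_term t2 t3 _ _ r2 r3 n32 n3m2 R.
- have g3 : g t3 = t2.
    apply: (mulfI (_ : - t1 * - t3 != 0)); first by rewrite mulf_eq0 !oppr_eq0 negb_or nz1 nz3.
    transitivity (g t1 * g t2 * g t3); first by rewrite g1 g2.
    rewrite gP; ring.
  rewrite g1 g2 g3 in gR.
  have ggR := Gapp _ _ _ (EN _ E1) (EN _ E3) E2 gR.
  rewrite !raddfN /= g1 g3 g2 opprK in ggR.
  have S : iA (a + a) + iA (b1 + b1) * t1 =
    (iA a + iA b1 * t1 + iA b2 * t2 + iA b3 * t3) + (iA a + iA b1 * t1 + iA b2 * - t2 + iA b3 * - t3) by ring.
  rewrite R ggR addr0 in S; have [/twoz a0 /twoz b10] := @irr1 t1 _ _ r1 S.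
  rewrite a0 b10 !rmorph0 mul0r !add0r in R.
  by have [] := @two_term t2 t3 _ _ r2 r3 n32 n3m2 R.
Qed.
End Proof25.

Lemma scale_iA (L : fieldExtType rat) (c : rat) (x : L) : c *: x = in_alg L c * x.
Proof. by rewrite mulr_algl. Qed.

Theorem theorem2p5 (l m : nat) (L : fieldExtType rat) (t1 t2 t3 : L) :
  (0 < l)%nat -> (0 < m)%nat ->
  map_poly (in_alg L) (q_lm l m) =
    \prod_(r <- [:: t1; - t1; t2; - t2; t3; - t3]) ('X - r%:P) ->
  irreducible_poly (q_lm l m) ->
  free [:: 1; t1; t2; t3].
Proof.
move=> _ _ hq hirr.
have -> : [:: 1; t1; t2; t3] = tval [tuple 1; t1; t2; t3] by [].
apply/freeP => k hk.
rewrite !big_ord_recl big_ord0 /= !scale_iA mulr1 addr0 !addrA in hk.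
have [a0 b10 b20 b30] := @indep l m L t1 t2 t3 hq hirr _ _ _ _ hk.
case=> [[|[|[|[|i]]]] Hi] //.
- by rewrite -a0; congr k; apply: val_inj.
- by rewrite -b10; congr k; apply: val_inj.
- by rewrite -b20; congr k; apply: val_inj.
- by rewrite -b30; congr k; apply: val_inj.
Qed.
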